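(* Let $1\le k\le n-1$ and let $\Sigma=\mathbb{S}^k\times\mathbb{R}^{n-k}\subset\mathbb{R}^{n+1}$ be a self-shrinker. Let $H\subset\mathbb{R}^{n-k}$ be an open half-space whose boundary is an $(n-k-1)$-dimensional linear subspace (through the origin). Then $\mathbb{S}^k\times H\subset\Sigma$ is unstable, i.e. $L$ has a negative eigenvalue with zero boundary data on it.
   Context: $\mathbb{S}^k$ is the round sphere of radius $\sqrt{2k}$ centered at the origin of $\mathbb{R}^{k+1}$, and $\mathbb{S}^k\times\mathbb{R}^{n-k}\subset\mathbb{R}^{k+1}\times\mathbb{R}^{n-k}$. Stability operator: $Lf=\Delta f-\tfrac12\langle\vec x,\nabla f\rangle+(|A|^2+\tfrac12)f$; eigenvalue convention $Lu=-\lambda u$ with $u\in L^2(e^{-|\vec x|^2/4}d\mu)$. A region is stable if it carries a strictly positive function $u$ with $Lu=0$, and unstable otherwise. *)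

(* Defs.v *)
From Stdlib Require Import Reals Lra Lia Arith.
Open Scope R_scope.

(* Points of R^(n+1) are represented as functions nat -> R; only the
   coordinates 0..n are meaningful.  Coordinates 0..k form the R^(k+1)
   factor (containing S^k), coordinates k+1..n form the R^(n-k) factor. *)
Definition pt := nat -> R.

Definition upd (p : pt) (i : nat) (v : R) : pt :=
  fun j => if Nat.eqb j i then v else p j.

Definition line (f : pt -> R) (p : pt) (i : nat) : R -> R :=
  fun t => f (upd p i (p i + t)).

Definition cont_at (n : nat) (g : pt -> R) (p : pt) : Prop :=
  forall eps, 0 < eps -> exists delta, 0 < delta /\
    forall q : pt, (forall i, (i <= n)%nat -> Rabs (q i - p i) < delta) ->
      Rabs (g q - g p) < eps.

(* f is C^2 on the (open) set U of R^(n+1), with first partials d1 i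
   and second partials d2 i j (= d/dx_j d/dx_i f). *)
Definition C2_on_with (n : nat) (U : pt -> Prop) (f : pt -> R)
  (d1 : nat -> pt -> R) (d2 : nat -> nat -> pt -> R) : Prop :=
  forall p, U p ->
    cont_at n f p /\
    forall i j, (i <= n)%nat -> (j <= n)%nat ->
      derivable_pt_lim (line f p i) 0 (d1 i p) /\
      derivable_pt_lim (line (d1 i) p j) 0 (d2 i j p) /\
      cont_at n (d1 i) p /\ cont_at n (d2 i j) p.

Definition rad (k : nat) : R := sqrt (2 * INR k).

Definition xnorm2 (k : nat) (p : pt) : R := sum_f_R0 (fun i => (p i) ^ 2) k.

Definition on_cyl (k : nat) (p : pt) : Prop := xnorm2 k p = (rad k) ^ 2.

Definition ydot (n k : nat) (a : nat -> R) (p : pt) : R :=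
  sum_f_R0 (fun j => a j * p (S k + j)%nat) (n - k - 1).

(* squared norm of the second fundamental form of S^k x R^(n-k):
   k principal curvatures equal to 1/rad, the others 0 *)
Definition normA2 (k : nat) : R := INR k / (rad k) ^ 2.

(* radial projection onto Sigma (0-homogeneous in the R^(k+1) factor);
   a function u on Sigma is extended by u o cyl_proj to a neighbourhood *)
Definition cyl_proj (n k : nat) (p : pt) : pt :=
  fun i => if Nat.leb i k then rad k * p i / sqrt (xnorm2 k p)
           else if Nat.leb i n then p i else 0.

Definition region (n k : nat) (a : nat -> R) (p : pt) : Prop :=
  on_cyl k p /\ 0 < ydot n k a p.
Definition nbhd (n k : nat) (a : nat -> R) (p : pt) : Prop :=
  0 < xnorm2 k p /\ 0 < ydot n k a p.

(* Stability operator applied to u at p in Sigma, computed from the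
   partials of the 0-homogeneous extension ut = u o cyl_proj:
   L u = Delta_Sigma u - 1/2 <x, grad u> + (|A|^2 + 1/2) u. *)
Definition Lop (n k : nat) (ut : pt -> R) (d1 : nat -> pt -> R)
  (d2 : nat -> nat -> pt -> R) (p : pt) : R :=
  sum_f_R0 (fun i => d2 i i p) n
  - / 2 * sum_f_R0 (fun i => p i * d1 i p) n
  + (normA2 k + / 2) * ut p.

Definition stable_halfcyl (n k : nat) (a : nat -> R) : Prop :=
  exists (u : pt -> R) (d1 : nat -> pt -> R) (d2 : nat -> nat -> pt -> R),
    C2_on_with n (nbhd n k a) (fun p => u (cyl_proj n k p)) d1 d2 /\
    (forall p, region n k a p -> 0 < u (cyl_proj n k p)) /\
    (forall p, region n k a p ->
       Lop n k (fun q => u (cyl_proj n k q)) d1 d2 p = 0).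

(* Main.v *)
Require Import Defs.
From Stdlib Require Import Reals Lra Lia Arith Psatz FunctionalExtensionality.
From Coquelicot Require Import Coquelicot.
From mathcomp Require all_boot all_order all_algebra all_classical all_reals all_analysis Rstruct Rstruct_topology.
Open Scope R_scope.

Lemma cont_const n c p : cont_at n (fun _ => c) p.
Proof. intros e he; exists 1; split; [lra|]; intros; rewrite Rminus_diag, Rabs_R0; lra. Qed.

Lemma cont_coord n i p : (i <= n)%nat -> cont_at n (fun q => q i) p.
Proof. intros hi e he; exists e; split; [lra|]; intros q hq; apply hq; lia. Qed.

Lemma cont_plus n f g p : cont_at n f p -> cont_at n g p -> cont_at n (fun q => f q + g q) p.
Proof.
  intros hf hg e he.
  destruct (hf (e/2)) as [d1 [hd1 H1]]; [lra|].
  destruct (hg (e/2)) as [d2 [hd2 H2]]; [lra|].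
  exists (Rmin d1 d2); split; [apply Rmin_pos; lra|].
  intros q hq.
  assert (A1 : Rabs (f q - f p) < e/2) by (apply H1; intros i hi; specialize (hq i hi); pose proof (Rmin_l d1 d2); lra).
  assert (A2 : Rabs (g q - g p) < e/2) by (apply H2; intros i hi; specialize (hq i hi); pose proof (Rmin_r d1 d2); lra).
  replace (f q + g q - (f p + g p)) with ((f q - f p) + (g q - g p)) by ring.
  pose proof (Rabs_triang (f q - f p) (g q - g p)); lra.
Qed.

Lemma cont_comp n f (h : R -> R) p : cont_at n f p -> continuity_pt h (f p) ->
  cont_at n (fun q => h (f q)) p.
Proof.
  intros hf hh e he.
  destruct (hh e he) as [a [ha H]].
  destruct (hf a ha) as [d [hd Hd]].
  exists d; split; [lra|]; intros q hq.
  specialize (Hd q hq).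
  destruct (Req_dec (f q) (f p)) as [E|E].
  - rewrite E, Rminus_diag, Rabs_R0; lra.
  - apply (H (f q)); split; [split; [exact I| auto]| exact Hd].
Qed.

Lemma cont_scal n c f p : cont_at n f p -> cont_at n (fun q => c * f q) p.
Proof. intros hf; apply (cont_comp n f (fun x => c * x)); auto; reg. Qed.

Lemma cont_opp n f p : cont_at n f p -> cont_at n (fun q => - f q) p.
Proof. intros hf; apply (cont_comp n f (fun x => - x)); auto; reg. Qed.

Lemma cont_sq n f p : cont_at n f p -> cont_at n (fun q => f q ^ 2) p.
Proof. intros hf; apply (cont_comp n f (fun x => x ^ 2)); auto; reg. Qed.

Lemma cont_mult n f g p : cont_at n f p -> cont_at n g p -> cont_at n (fun q => f q * g q) p.
Proof.
  intros hf hg.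
  assert (H : cont_at n (fun q => / 4 * ((f q + g q) ^ 2 + - (f q + - g q) ^ 2)) p).
  { apply cont_scal, cont_plus; [apply cont_sq, cont_plus; auto|].
    apply cont_opp, cont_sq, cont_plus; auto; apply cont_opp; auto. }
  intros e he; destruct (H e he) as [d [hd Hd]]; exists d; split; auto.
  intros q hq; specialize (Hd q hq).
  replace (f q * g q - f p * g p) with
    (/ 4 * ((f q + g q) ^ 2 + - (f q + - g q) ^ 2) - / 4 * ((f p + g p) ^ 2 + - (f p + - g p) ^ 2)) by field.
  exact Hd.
Qed.

Lemma cont_inv n f p : cont_at n f p -> f p <> 0 -> cont_at n (fun q => / f q) p.
Proof.
  intros hf hne; apply (cont_comp n f (fun x => / x)); auto.
  apply (continuity_pt_inv (fun x => x)); auto; reg.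
Qed.

Lemma cont_sum n (F : nat -> pt -> R) m p :
  (forall j, (j <= m)%nat -> cont_at n (F j) p) ->
  cont_at n (fun q => sum_f_R0 (fun j => F j q) m) p.
Proof.
  induction m; intros H; simpl.
  - apply H; lia.
  - apply cont_plus; [apply IHm; intros; apply H; lia| apply H; lia].
Qed.

Lemma cont_eq n f p q : cont_at n f p -> (forall i, (i <= n)%nat -> q i = p i) -> f q = f p.
Proof.
  intros hf hq.
  destruct (Req_dec (f q) (f p)) as [E|E]; auto.
  assert (hpos : 0 < Rabs (f q - f p)) by (apply Rabs_pos_lt; lra).
  destruct (hf _ hpos) as [d [hd Hd]].
  assert (Rabs (f q - f p) < Rabs (f q - f p)); [|lra].
  apply Hd; intros i hi; rewrite hq by auto; rewrite Rminus_diag, Rabs_R0; lra.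
Qed.

Definition close (n : nat) (q p : pt) (e : R) : Prop :=
  forall i, (i <= n)%nat -> Rabs (q i - p i) < e.

Lemma closed_le n f p c : cont_at n f p ->
  (forall e, 0 < e -> exists q, f q <= c /\ close n q p e) -> f p <= c.
Proof.
  intros hf H.
  destruct (Rle_dec (f p) c) as [h|h]; auto.
  assert (hpos : 0 < f p - c) by lra.
  destruct (hf _ hpos) as [d [hd Hd]].
  destruct (H d hd) as [q [hq1 hq2]].
  specialize (Hd q hq2).
  pose proof (Rabs_def2 _ _ Hd); lra.
Qed.

Lemma closed_ge n f p c : cont_at n f p ->
  (forall e, 0 < e -> exists q, c <= f q /\ close n q p e) -> c <= f p.
Proof.
  intros hf H.
  assert (- f p <= - c); [|lra].
  apply (closed_le n (fun q => - f q)); [apply cont_opp; auto|].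
  intros e he; destruct (H e he) as [q [h1 h2]]; exists q; split; [lra|auto].
Qed.

Lemma sum_nonneg (F : nat -> R) m : (forall i, (i <= m)%nat -> 0 <= F i) -> 0 <= sum_f_R0 F m.
Proof.
  induction m; intros H; simpl; [apply H; lia|].
  assert (0 <= sum_f_R0 F m) by (apply IHm; intros; apply H; lia).
  assert (0 <= F (S m)) by (apply H; lia). lra.
Qed.

Lemma sum_term_le (F : nat -> R) m j : (forall i, (i <= m)%nat -> 0 <= F i) ->
  (j <= m)%nat -> F j <= sum_f_R0 F m.
Proof.
  induction m; intros H hj.
  - simpl; replace j with 0%nat by lia; lra.
  - simpl. destruct (Nat.eq_dec j (S m)) as [E|E].
    + subst. assert (0 <= sum_f_R0 F m); [|lra].
      apply sum_nonneg; intros; apply H; lia.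
    + assert (F j <= sum_f_R0 F m) by (apply IHm; [intros; apply H; lia| lia]).
      assert (0 <= F (S m)) by (apply H; lia). lra.
Qed.

Lemma sq_le_abs x M : x ^ 2 <= M -> Rabs x <= M + 1.
Proof.
  intros h. pose proof (Rabs_pos x). rewrite <- pow2_abs in h. nra.
Qed.

Lemma shift_deriv f t l : derivable_pt_lim (fun s => f (t + s)) 0 l -> derivable_pt_lim f t l.
Proof.
  intros H e he. destruct (H e he) as [d Hd]. exists d. intros h hh hd.
  specialize (Hd h hh hd). replace (t + (0 + h)) with (t + h) in Hd by ring.
  replace (t + 0) with t in Hd by ring. exact Hd.
Qed.

Lemma onedim (F F1 : R -> R) F2 d : 0 < d ->
  (forall t, Rabs t < d -> derivable_pt_lim F t (F1 t)) ->
  derivable_pt_lim F1 0 F2 ->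
  (forall t, Rabs t < d -> F t <= F 0) -> F1 0 = 0 /\ F2 <= 0.
Proof.
  intros hd HF HF1 Hmax.
  assert (E0 : F1 0 = 0).
  { assert (pr : derivable_pt F 0).
    { exists (F1 0). apply HF. rewrite Rabs_R0; lra. }
    rewrite <- (derive_pt_eq_0 F 0 (F1 0) pr) by (apply HF; rewrite Rabs_R0; lra).
    apply (deriv_maximum F (-d) d 0 pr); try lra.
    intros x h1 h2; apply Hmax; apply Rabs_def1; lra. }
  split; auto.
  destruct (Rle_dec F2 0) as [h|h]; auto. exfalso.
  assert (hF2 : 0 < F2) by lra.
  destruct (HF1 F2 hF2) as [d' Hd'].
  set (h0 := Rmin d (pos d') / 2).
  assert (hm : 0 < Rmin d (pos d')) by (apply Rmin_pos; [lra| apply cond_pos]).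
  assert (h0pos : 0 < h0) by (unfold h0; lra).
  assert (h0d : h0 < d) by (unfold h0; pose proof (Rmin_l d d'); lra).
  assert (h0d' : h0 < d') by (unfold h0; pose proof (Rmin_r d d'); lra).
  destruct (MVT_cor2 F F1 0 h0) as [c [Ec Hc]]; auto.
  { intros c hc. apply HF. apply Rabs_def1; lra. }
  assert (F1 c > 0).
  { assert (hc0 : c <> 0) by lra.
    assert (hcd : Rabs c < d') by (apply Rabs_def1; lra).
    specialize (Hd' c hc0 hcd).
    rewrite Rplus_0_l, E0, Rminus_0_r in Hd'.
    pose proof (Rabs_def2 _ _ Hd') as [_ H2].
    assert (0 < F1 c / c) by lra.
    assert (F1 c = F1 c / c * c) by (field; lra).
    nra. }
  assert (F h0 <= F 0) by (apply Hmax; apply Rabs_def1; lra).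
  nra.
Qed.

Lemma upd_same p i v : upd p i v i = v.
Proof. unfold upd; rewrite Nat.eqb_refl; auto. Qed.

Lemma upd_other p i v j : j <> i -> upd p i v j = p j.
Proof. intros h; unfold upd; destruct (Nat.eqb_spec j i); [lia|auto]. Qed.

Lemma upd_upd p i v w : upd (upd p i v) i w = upd p i w.
Proof. apply functional_extensionality; intros j; unfold upd; destruct (Nat.eqb j i); auto. Qed.

Lemma line_shift f p i t s : line f (upd p i (p i + t)) i s = line f p i (t + s).
Proof. unfold line; rewrite upd_same, upd_upd; f_equal; f_equal; ring. Qed.

Lemma upd_close n p i t e : Rabs t < e -> 0 < e -> close n (upd p i (p i + t)) p e.
Proof.
  intros h he j hj; unfold upd; destruct (Nat.eqb_spec j i).
  - subst; replace (p i + t - p i) with t by ring; auto.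
  - rewrite Rminus_diag, Rabs_R0; auto.
Qed.

Lemma sum_upd (f : nat -> R -> R) p i v b m :
  sum_f_R0 (fun j => f j (upd p i v (b + j)%nat)) m =
  sum_f_R0 (fun j => f j (p (b + j)%nat)) m +
  (if andb (Nat.leb b i) (Nat.leb i (b + m)) then f (i - b)%nat v - f (i - b)%nat (p i) else 0).
Proof.
  induction m; simpl.
  - unfold upd. destruct (Nat.eqb_spec (b + 0) i).
    + subst. rewrite Nat.leb_refl. replace (Nat.leb b (b+0)) with true by (symmetry; apply Nat.leb_le; lia).
      simpl. replace (b + 0 - b)%nat with 0%nat by lia. ring.
    + destruct (Nat.leb_spec b i); destruct (Nat.leb_spec i (b + 0)); simpl; try lia; ring.
  - rewrite IHm. unfold upd at 1. destruct (Nat.eqb_spec (b + S m) i).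
    + subst. replace (Nat.leb b (b + S m)) with true by (symmetry; apply Nat.leb_le; lia).
      replace (Nat.leb (b + S m) (b + m)) with false by (symmetry; apply Nat.leb_gt; lia).
      rewrite Nat.leb_refl. simpl. replace (b + S m - b)%nat with (S m) by lia. ring.
    + destruct (Nat.leb_spec b i); destruct (Nat.leb_spec i (b + m)); destruct (Nat.leb_spec i (b + S m)); simpl; try lia; ring.
Qed.


Module Bridge.
Import all_boot all_order all_algebra all_classical all_reals all_analysis Rstruct Rstruct_topology.
Import Order.TTheory GRing.Theory Num.Theory.
Local Open Scope classical_set_scope.
Local Open Scope ring_scope.

Definition emb (n : nat) (v : 'rV[R]_(n.+1)) : nat -> R :=
  fun i => if (i <= n)%N then v ord0 (inord i) else 0%R.

Arguments emb {n}.
Lemma emb_row n (p : nat -> R) i : (i <= n)%N -> emb (\row_(j < n.+1) p j) i = p i.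
Proof. move=> h; rewrite /emb h mxE inordK //. Qed.

Lemma evt (n : nat) (B : R) (K : (nat -> R) -> Prop) (f : (nat -> R) -> R) :
  (forall p, K p -> forall i, Peano.le i n -> Rle (Rabs (p i)) B) ->
  (forall p, (forall eps, Rlt 0 eps -> exists q, K q /\
       forall i, Peano.le i n -> Rlt (Rabs (q i - p i)) eps) -> K p) ->
  (exists p, K p) ->
  (forall p, K p -> cont_at n f p) ->
  exists p, K p /\ forall q, K q -> exists p', K p' /\ Rle (f p') (f p) /\ forall i, Peano.le i n -> p' i = q i.
Proof.
move=> Kb Kc [p0 Kp0] fc.
pose A := [set v : 'rV[R]_(n.+1) | K (emb v)].
have KA : forall q, K q -> A (\row_(j < n.+1) q j).
  move=> q Kq; apply: Kc => eps eps0; exists q; split => // i /ssrnat.leP ilen.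
  by rewrite emb_row // Rminus_diag Rabs_R0.
have A0 : A !=set0 by exists (\row_(j < n.+1) p0 j); exact: KA.
have cA : compact A.
  apply: (@subclosed_compact _ _ [set v : 'rV[R]_n.+1 | forall i, `[(- B), B]%classic (v ord0 i)]).
  - move=> v clv; apply: Kc => eps /RltP eps0.
    have := clv (ball v eps) (nbhsx_ballx v eps eps0).
    move=> [w [Aw [_ vw]]]; exists (emb w); split => // i ilen.
    have ilen' : (i <= n)%N by apply/ssrnat.leP.
    rewrite /emb ilen'.
    have := vw ord0 (inord i); rewrite /ball /= => /RltP.
    by rewrite Rabs_minus_sym.
  - by apply: (@rV_compact _ _ (fun=> `[(- B), B]%classic)) => _; exact: segment_compact.
  - move=> v Av i /=; rewrite in_itv /=.
    have := Kb _ Av i; rewrite /emb.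
    have ilen : (i <= n)%N by rewrite -ltnS.
    have -> : (inord i : 'I_n.+1) = i by apply: val_inj; rewrite /= inordK.
    rewrite ilen => /(_ (elimT ssrnat.leP ilen)) h.
    by rewrite -ler_norml; apply/RleP.
have cf : {within A, continuous (f \o @emb n)}.
  apply: continuous_in_subspaceT => v /set_mem Av.
  move=> Bs /nbhs_ballP [e /RltP e0 eB].
  have [d [d0 hd]] := fc _ Av e e0.
  apply/nbhs_ballP; exists d; first by apply/RltP.
  move=> w [_ vw] /=.
  apply: eB; rewrite /ball /=; apply/RltP.
  change (Rlt (Rabs (Rminus (f (emb v)) (f (emb w)))) e).
  rewrite Rabs_minus_sym; apply: hd => i ilen.
  have ilen' : (i <= n)%N by apply/ssrnat.leP.
  rewrite /emb ilen'.
  have := vw ord0 (inord i); rewrite /ball /= => /RltP.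
  by rewrite Rabs_minus_sym.
have [c /set_mem Ac cmax] := EVT_max_rV A0 cA cf.
exists (emb c); split => // q Kq.
exists (emb (\row_(j < n.+1) q j)); split; first exact: KA.
split; first by apply/RleP; apply: cmax; apply/mem_set; exact: KA.
by move=> i /ssrnat.leP ilen; rewrite emb_row.
Qed.
End Bridge.


Definition G0 x := 6*x + 2*x^2 - x^3/2.
Definition G1 x := 6 + 4*x - 3/2*x^2.
Definition G2 x := 4 - 3*x.
Definition psi c A e R0 s r x al ga t :=
  G0 ((s + al*t)/c - e) * (R0 - ((r + ga*((x+t)^2 - x^2)) - (s+al*t)^2/A)).
Definition psi1 c A e R0 s r x al ga t :=
  G1 ((s + al*t)/c - e) * (al/c) * (R0 - ((r + ga*((x+t)^2 - x^2)) - (s+al*t)^2/A))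
  + G0 ((s + al*t)/c - e) * (-(ga*(2*(x+t))) + 2*(s+al*t)*al/A).
Definition psi2 c A e R0 s r x al ga :=
  G2 (s/c - e) * (al/c)^2 * (R0 - (r - s^2/A))
  + 2 * G1 (s/c - e) * (al/c) * (-(ga*(2*x)) + 2*s*al/A)
  + G0 (s/c - e) * (-(2*ga) + 2*al^2/A).

Lemma psi_d c A e R0 s r x al ga t : c <> 0 -> A <> 0 ->
  derivable_pt_lim (psi c A e R0 s r x al ga) t (psi1 c A e R0 s r x al ga t).
Proof.
  intros hc hA. apply is_derive_Reals. unfold psi, psi1, G0, G1.
  auto_derive; [auto|]. field; auto.
Qed.

Lemma psi1_d c A e R0 s r x al ga : c <> 0 -> A <> 0 ->
  derivable_pt_lim (psi1 c A e R0 s r x al ga) 0 (psi2 c A e R0 s r x al ga).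
Proof.
  intros hc hA. apply is_derive_Reals. unfold psi2, psi1, G0, G1, G2.
  auto_derive; [auto|]. field; auto.
Qed.

Lemma M_pos s : 0 <= s -> 0 < G2 s - /2*(s + /10)*G1 s + 3/4 * G0 s.
Proof. intros h. unfold G0, G1, G2. assert (0 <= s*((s-16/10)*(s-16/10))) by (apply Rmult_le_pos; [lra| apply Rle_0_sqr]). nra. Qed.
Lemma G0_pos s : 0 < s < 6 -> 0 < G0 s.
Proof. intros h. unfold G0. nra. Qed.
Lemma G0_nonneg s : 0 <= s <= 6 -> 0 <= G0 s.
Proof. intros h. unfold G0. nra. Qed.
Lemma G0_pos_inv s : 0 <= s <= 6 -> 0 < G0 s -> 0 < s < 6.
Proof.
  intros h hg. destruct (Req_dec s 0) as [E|E]; [subst; unfold G0 in hg; lra|].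
  destruct (Req_dec s 6) as [E'|E']; [subst; unfold G0 in hg; lra| lra].
Qed.
Lemma key_ineq s Q z D : 0 < s < 6 -> 0 <= z -> Q = 8*D - z -> 0 < Q ->
  0 < Q*(G2 s - /2*(s + /10)*G1 s + G0 s) + G0 s * (2 - 2*D + z).
Proof.
  intros hs hz hQ hQp. pose proof (M_pos s ltac:(lra)). pose proof (G0_pos s hs).
  replace (Q*(G2 s - /2*(s + /10)*G1 s + G0 s) + G0 s * (2 - 2*D + z)) with
   (Q*(G2 s - /2*(s + /10)*G1 s + 3/4*G0 s) + G0 s * (2 + 3/4*z)) by (rewrite hQ; field).
  nra.
Qed.

Definition Dm (n k : nat) := (n - k - 1)%nat.
Definition sA n k (a : nat -> R) := sum_f_R0 (fun j => a j ^ 2) (Dm n k).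
Definition r2 n k (p : pt) := sum_f_R0 (fun j => p (S k + j)%nat ^ 2) (Dm n k).
Definition ee := / 10.
Definition RR n k := 8 * INR (S (Dm n k)).
Definition tt n k a p := ydot n k a p / sqrt (sA n k a).
Definition z2 n k a p := r2 n k p - ydot n k a p ^ 2 / sA n k a.
Definition Phi n k a p := G0 (tt n k a p - ee) * (RR n k - z2 n k a p).
Definition Kset n k a p := on_cyl k p /\ ee <= tt n k a p <= ee + 6 /\ z2 n k a p <= RR n k.
Definition ycond n k i := andb (Nat.leb (S k) i) (Nat.leb i (S k + Dm n k)).
Definition al n k (a : nat -> R) i := if ycond n k i then a (i - S k)%nat else 0.
Definition ga n k i := if ycond n k i then 1 else 0.

Lemma ydot_upd n k a p i t :
  ydot n k a (upd p i (p i + t)) = ydot n k a p + al n k a i * t.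
Proof.
  unfold ydot. rewrite (sum_upd (fun j x => a j * x)). fold (Dm n k).
  unfold al, ycond. destruct (andb _ _); ring.
Qed.

Lemma r2_upd n k p i t :
  r2 n k (upd p i (p i + t)) = r2 n k p + ga n k i * ((p i + t)^2 - p i ^2).
Proof.
  unfold r2. rewrite (sum_upd (fun j x => x ^ 2)).
  unfold ga, ycond. destruct (andb _ _); ring.
Qed.

Lemma Phi_upd n k a p i t :
  Phi n k a (upd p i (p i + t)) =
  psi (sqrt (sA n k a)) (sA n k a) ee (RR n k) (ydot n k a p) (r2 n k p) (p i) (al n k a i) (ga n k i) t.
Proof.
  unfold Phi, psi, tt, z2. rewrite ydot_upd, r2_upd. reflexivity.
Qed.

Lemma upd_id p i : upd p i (p i + 0) = p.
Proof. apply functional_extensionality; intros j; unfold upd; destruct (Nat.eqb_spec j i); subst; auto; ring. Qed.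

Lemma sum_y n k (H : nat -> R) : (k < n)%nat -> (forall i, (i <= k)%nat -> H i = 0) ->
  sum_f_R0 H n = sum_f_R0 (fun j => H (S k + j)%nat) (Dm n k).
Proof.
  intros hkn hz. rewrite (tech2 H k n hkn). rewrite sum_eq_R0 by auto.
  replace (n - S k)%nat with (Dm n k) by (unfold Dm; lia). ring.
Qed.

Lemma ycond_y n k j : (j <= Dm n k)%nat -> ycond n k (S k + j) = true.
Proof. intros h; unfold ycond; apply andb_true_intro; split; apply Nat.leb_le; lia. Qed.
Lemma ycond_x n k i : (i <= k)%nat -> ycond n k i = false.
Proof. intros h; unfold ycond. replace (Nat.leb (S k) i) with false by (symmetry; apply Nat.leb_gt; lia). auto. Qed.
Lemma al_y n k a j : (j <= Dm n k)%nat -> al n k a (S k + j) = a j.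
Proof. intros h; unfold al; rewrite ycond_y by auto. f_equal; lia. Qed.
Lemma ga_y n k j : (j <= Dm n k)%nat -> ga n k (S k + j) = 1.
Proof. intros h; unfold ga; rewrite ycond_y by auto. auto. Qed.
Lemma al_x n k a i : (i <= k)%nat -> al n k a i = 0.
Proof. intros h; unfold al; rewrite ycond_x by auto. auto. Qed.
Lemma ga_x n k i : (i <= k)%nat -> ga n k i = 0.
Proof. intros h; unfold ga; rewrite ycond_x by auto. auto. Qed.

Lemma sum_lin3 (f g : nat -> R) K1 K2 K3 m :
  sum_f_R0 (fun j => f j * K1 + g j * K2 + K3) m =
  K1 * sum_f_R0 f m + K2 * sum_f_R0 g m + K3 * INR (S m).
Proof.
  rewrite !sum_plus, !scal_sum, sum_cte. ring.
Qed.

Lemma sum_psi2 n k a p (hkn : (k < n)%nat) (hA : 0 < sA n k a) :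
  sum_f_R0 (fun i => psi2 (sqrt (sA n k a)) (sA n k a) ee (RR n k) (ydot n k a p) (r2 n k p) (p i) (al n k a i) (ga n k i)) n
  = G2 (ydot n k a p/sqrt (sA n k a) - ee) * (RR n k - (r2 n k p - (ydot n k a p)^2/sA n k a))
    + G0 (ydot n k a p/sqrt (sA n k a) - ee) * (2 - 2 * INR (S (Dm n k))).
Proof.
  assert (hc : sqrt (sA n k a) * sqrt (sA n k a) = sA n k a) by (apply sqrt_sqrt; lra).
  set (c := sqrt (sA n k a)) in *. set (A := sA n k a) in *.
  assert (hc0 : c <> 0) by (intro E; rewrite E in hc; lra).
  assert (hA0 : A <> 0) by lra.
  rewrite (sum_y n k) by (auto; intros i hi; rewrite al_x, ga_x by auto; unfold psi2; field; try split; auto).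
  set (s := ydot n k a p). set (sg := s / c - ee). set (Q := RR n k - (r2 n k p - s ^ 2 / A)).
  rewrite (sum_eq _ (fun j => a j ^ 2 * (G2 sg * Q / (c*c) + 4 * G1 sg * s / (c * A) + 2 * G0 sg / A)
      + (a j * p (S k + j)%nat) * (- 4 * G1 sg / c) + (- 2 * G0 sg))).
  2:{ intros j hj. rewrite al_y, ga_y by auto. unfold psi2. fold sg. fold Q. field. try split; auto. }
  rewrite sum_lin3.
  change (sum_f_R0 (fun j : nat => a j ^ 2) (Dm n k)) with A.
  change (sum_f_R0 (fun j : nat => a j * p (S k + j)%nat) (Dm n k)) with s.
  rewrite hc. field. auto.
Qed.

Lemma sum_psi1 n k a p (hkn : (k < n)%nat) (hA : 0 < sA n k a) :
  sum_f_R0 (fun i => p i * psi1 (sqrt (sA n k a)) (sA n k a) ee (RR n k) (ydot n k a p) (r2 n k p) (p i) (al n k a i) (ga n k i) 0) n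
  = G1 (ydot n k a p/sqrt (sA n k a) - ee) * (ydot n k a p/sqrt (sA n k a)) * (RR n k - (r2 n k p - (ydot n k a p)^2/sA n k a))
    + G0 (ydot n k a p/sqrt (sA n k a) - ee) * (- 2 * r2 n k p + 2 * (ydot n k a p)^2 / sA n k a).
Proof.
  assert (hc : sqrt (sA n k a) * sqrt (sA n k a) = sA n k a) by (apply sqrt_sqrt; lra).
  set (c := sqrt (sA n k a)) in *. set (A := sA n k a) in *.
  assert (hc0 : c <> 0) by (intro E; rewrite E in hc; lra).
  assert (hA0 : A <> 0) by lra.
  rewrite (sum_y n k) by (auto; intros i hi; rewrite al_x, ga_x by auto; unfold psi1; field; try split; auto).
  set (s := ydot n k a p). set (sg := s / c - ee). set (Q := RR n k - (r2 n k p - s ^ 2 / A)).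
  rewrite (sum_eq _ (fun j => (a j * p (S k + j)%nat) * (G1 sg * Q / c + 2 * G0 sg * s / A)
      + (p (S k + j)%nat ^ 2) * (- 2 * G0 sg) + 0)).
  2:{ intros j hj. rewrite al_y, ga_y by auto. unfold psi1.
      replace ((s + a j * 0) / c - ee) with sg by (unfold sg; field; auto).
      replace (RR n k - (r2 n k p + 1 * ((p (S k + j)%nat + 0) ^ 2 - p (S k + j)%nat ^ 2) - (s + a j * 0) ^ 2 / A)) with Q by (unfold Q; field; auto).
      field. try split; auto. }
  rewrite sum_lin3.
  change (sum_f_R0 (fun j : nat => p (S k + j)%nat ^ 2) (Dm n k)) with (r2 n k p).
  change (sum_f_R0 (fun j : nat => a j * p (S k + j)%nat) (Dm n k)) with s.
  field. auto.
Qed.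

Lemma sum_lin3' (f g h : nat -> R) K1 K2 K3 m :
  sum_f_R0 (fun j => f j * K1 + g j * K2 + h j * K3) m =
  K1 * sum_f_R0 f m + K2 * sum_f_R0 g m + K3 * sum_f_R0 h m.
Proof. rewrite !sum_plus, !scal_sum. ring. Qed.

Lemma A_pos n k a : (exists j, (j < n - k)%nat /\ a j <> 0) -> 0 < sA n k a.
Proof.
  intros [j [hj ha]].
  assert (0 < a j ^ 2) by (simpl; rewrite Rmult_1_r; apply Rsqr_pos_lt; auto).
  apply Rlt_le_trans with (a j ^ 2); auto.
  apply (sum_term_le (fun j => a j ^ 2)); [intros; apply pow2_ge_0| unfold Dm; lia].
Qed.

Lemma z2_nonneg n k a p : 0 < sA n k a -> 0 <= z2 n k a p.
Proof.
  intros hA. set (l := ydot n k a p / sA n k a).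
  assert (H : 0 <= sum_f_R0 (fun j => (p (S k + j)%nat - l * a j) ^ 2) (Dm n k))
    by (apply sum_nonneg; intros; apply pow2_ge_0).
  rewrite (sum_eq _ (fun j => p (S k + j)%nat ^ 2 * 1 + (a j * p (S k + j)%nat) * (-2 * l) + a j ^ 2 * (l^2))) in H
    by (intros; ring).
  rewrite sum_lin3' in H.
  change (sum_f_R0 (fun j : nat => p (S k + j)%nat ^ 2) (Dm n k)) with (r2 n k p) in H.
  change (sum_f_R0 (fun j : nat => a j * p (S k + j)%nat) (Dm n k)) with (ydot n k a p) in H.
  change (sum_f_R0 (fun j : nat => a j ^ 2) (Dm n k)) with (sA n k a) in H.
  unfold z2. unfold l in H.
  replace (r2 n k p - ydot n k a p ^ 2 / sA n k a) with
    (1 * r2 n k p + -2 * (ydot n k a p / sA n k a) * ydot n k a p + (ydot n k a p / sA n k a) ^ 2 * sA n k a) by (field; lra).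
  lra.
Qed.

Lemma cont_ydot n k a p : (k < n)%nat -> cont_at n (ydot n k a) p.
Proof.
  intros h. unfold ydot. apply cont_sum. intros j hj.
  apply cont_scal, cont_coord. lia.
Qed.

Lemma cont_r2 n k p : (k < n)%nat -> cont_at n (r2 n k) p.
Proof.
  intros h. unfold r2. apply cont_sum. intros j hj.
  apply cont_sq, cont_coord. unfold Dm in hj. lia.
Qed.

Lemma cont_xnorm2 n k p : (k < n)%nat -> cont_at n (xnorm2 k) p.
Proof.
  intros h. unfold xnorm2. apply cont_sum. intros j hj.
  apply cont_sq, cont_coord. lia.
Qed.

Lemma cont_tt n k a p : (k < n)%nat -> cont_at n (tt n k a) p.
Proof.
  intros h. unfold tt.
  apply (cont_comp n (ydot n k a) (fun x => x / sqrt (sA n k a))); [apply cont_ydot; auto|]. reg.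
Qed.

Lemma cont_z2 n k a p : (k < n)%nat -> cont_at n (z2 n k a) p.
Proof.
  intros h. unfold z2.
  apply (cont_plus n (r2 n k) (fun q => - (ydot n k a q ^ 2 / sA n k a))); [apply cont_r2; auto|].
  apply (cont_comp n (ydot n k a) (fun x => - (x ^ 2 / sA n k a))); [apply cont_ydot; auto|]. reg.
Qed.

Lemma cont_Phi n k a p : (k < n)%nat -> cont_at n (Phi n k a) p.
Proof.
  intros h. unfold Phi. apply cont_mult.
  - apply (cont_comp n (tt n k a) (fun x => G0 (x - ee))); [apply cont_tt; auto|]. unfold G0. reg.
  - apply (cont_plus n (fun _ => RR n k) (fun q => - z2 n k a q)); [apply cont_const|].
    apply cont_opp, cont_z2; auto.
Qed.

Lemma rad_pos k : (1 <= k)%nat -> 0 < rad k.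
Proof. intros h. unfold rad. apply sqrt_lt_R0. apply le_INR in h. simpl in h. lra. Qed.

Lemma rad_sq k : rad k ^ 2 = 2 * INR k.
Proof. unfold rad. rewrite pow2_sqrt; auto. pose proof (pos_INR k). lra. Qed.

Lemma cp_y n k q i : (S k <= i)%nat -> (i <= n)%nat -> cyl_proj n k q i = q i.
Proof.
  intros h1 h2. unfold cyl_proj.
  replace (Nat.leb i k) with false by (symmetry; apply Nat.leb_gt; lia).
  replace (Nat.leb i n) with true by (symmetry; apply Nat.leb_le; lia). auto.
Qed.

Lemma cp_x n k q i : (i <= k)%nat -> cyl_proj n k q i = rad k * q i / sqrt (xnorm2 k q).
Proof.
  intros h1. unfold cyl_proj.
  replace (Nat.leb i k) with true by (symmetry; apply Nat.leb_le; lia). auto.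
Qed.

Lemma ydot_cp n k a q : (k < n)%nat -> ydot n k a (cyl_proj n k q) = ydot n k a q.
Proof. intros h; unfold ydot; apply sum_eq; intros j hj; rewrite cp_y; auto; lia. Qed.
Lemma r2_cp n k q : (k < n)%nat -> r2 n k (cyl_proj n k q) = r2 n k q.
Proof. intros h; unfold r2; apply sum_eq; intros j hj; rewrite cp_y; auto; unfold Dm in hj; lia. Qed.
Lemma tt_cp n k a q : (k < n)%nat -> tt n k a (cyl_proj n k q) = tt n k a q.
Proof. intros h; unfold tt; rewrite ydot_cp; auto. Qed.
Lemma z2_cp n k a q : (k < n)%nat -> z2 n k a (cyl_proj n k q) = z2 n k a q.
Proof. intros h; unfold z2; rewrite ydot_cp, r2_cp; auto. Qed.
Lemma Phi_cp n k a q : (k < n)%nat -> Phi n k a (cyl_proj n k q) = Phi n k a q.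
Proof. intros h; unfold Phi; rewrite tt_cp, z2_cp; auto. Qed.

Lemma xnorm2_cp n k q : 0 < xnorm2 k q -> xnorm2 k (cyl_proj n k q) = rad k ^ 2.
Proof.
  intros hX. unfold xnorm2 at 1.
  assert (hs : sqrt (xnorm2 k q) * sqrt (xnorm2 k q) = xnorm2 k q) by (apply sqrt_sqrt; lra).
  assert (hs0 : sqrt (xnorm2 k q) <> 0) by (intro E; rewrite E in hs; lra).
  rewrite (sum_eq _ (fun i => q i ^ 2 * (rad k ^ 2 / xnorm2 k q))).
  2:{ intros i hi. rewrite cp_x by auto. replace ((rad k * q i / sqrt (xnorm2 k q)) ^ 2) with (rad k ^ 2 * q i ^ 2 / (sqrt (xnorm2 k q) * sqrt (xnorm2 k q))) by (field; auto). rewrite hs. field. lra. }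
  rewrite <- scal_sum. fold (xnorm2 k q). field. lra.
Qed.

Lemma cp_idem n k q : (1 <= k)%nat -> 0 < xnorm2 k q -> cyl_proj n k (cyl_proj n k q) = cyl_proj n k q.
Proof.
  intros hk hX. apply functional_extensionality; intros i.
  pose proof (rad_pos k hk) as hr.
  unfold cyl_proj at 1. destruct (Nat.leb_spec i k).
  - assert (0 < sqrt (xnorm2 k q)) by (apply sqrt_lt_R0; auto).
    assert (rad k <> 0) by lra. assert (sqrt (xnorm2 k q) <> 0) by lra.
    rewrite xnorm2_cp by auto. rewrite sqrt_pow2 by lra. rewrite cp_x by auto. field.
    auto.
  - destruct (Nat.leb_spec i n).
    + rewrite cp_y by lia. auto.
    + unfold cyl_proj. replace (Nat.leb i k) with false by (symmetry; apply Nat.leb_gt; lia).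
      replace (Nat.leb i n) with false by (symmetry; apply Nat.leb_gt; lia). auto.
Qed.


Definition p0 n k a : pt := fun i =>
  if Nat.eqb i 0 then rad k else if Nat.leb i k then 0 else
  if Nat.leb i n then (ee + 3) * a (i - S k)%nat / sqrt (sA n k a) else 0.

Lemma p0_K n k a : (1 <= k)%nat -> (k < n)%nat -> 0 < sA n k a ->
  Kset n k a (p0 n k a) /\ tt n k a (p0 n k a) = ee + 3 /\ z2 n k a (p0 n k a) = 0.
Proof.
  intros hk hkn hA.
  assert (hc : sqrt (sA n k a) * sqrt (sA n k a) = sA n k a) by (apply sqrt_sqrt; lra).
  assert (hc0 : 0 < sqrt (sA n k a)) by (apply sqrt_lt_R0; auto).
  assert (Ex : xnorm2 k (p0 n k a) = rad k ^ 2).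
  { unfold xnorm2. rewrite decomp_sum by lia. rewrite sum_eq_R0.
    - unfold p0; simpl. ring.
    - intros i hi. unfold p0. simpl Nat.eqb.
      replace (Nat.leb (S i) k) with true by (symmetry; apply Nat.leb_le; lia). simpl; ring. }
  assert (Ey : ydot n k a (p0 n k a) = (ee + 3) * sqrt (sA n k a)).
  { unfold ydot. rewrite (sum_eq _ (fun j => a j ^ 2 * ((ee + 3) / sqrt (sA n k a)))).
    - rewrite <- scal_sum. fold (Dm n k). fold (sA n k a).
      set (c := sqrt (sA n k a)) in *. set (A := sA n k a) in *. rewrite <- hc. field. lra.
    - intros j hj. unfold p0. simpl Nat.eqb.
      replace (Nat.leb (S k + j) k) with false by (symmetry; apply Nat.leb_gt; lia).
      replace (Nat.leb (S k + j) n) with true by (symmetry; apply Nat.leb_le; unfold Dm in hj; lia).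
      replace (S k + j - S k)%nat with j by lia. cbv iota beta. field. lra. }
  assert (Er : r2 n k (p0 n k a) = (ee + 3) ^ 2).
  { unfold r2. rewrite (sum_eq _ (fun j => a j ^ 2 * ((ee + 3) ^ 2 / sA n k a))).
    - rewrite <- scal_sum. fold (sA n k a). field. lra.
    - intros j hj. unfold p0. simpl Nat.eqb.
      replace (Nat.leb (S k + j) k) with false by (symmetry; apply Nat.leb_gt; lia).
      replace (Nat.leb (S k + j) n) with true by (symmetry; apply Nat.leb_le; unfold Dm in hj; lia).
      replace (S k + j - S k)%nat with j by lia. cbv iota beta.
      replace (((ee + 3) * a j / sqrt (sA n k a)) ^ 2) with ((ee + 3)^2 * a j ^2 / (sqrt (sA n k a) * sqrt (sA n k a))) by (field; lra).
      rewrite hc. field. lra. }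
  assert (Et : tt n k a (p0 n k a) = ee + 3) by (unfold tt; rewrite Ey; field; lra).
  assert (Ez : z2 n k a (p0 n k a) = 0).
  { unfold z2. rewrite Er, Ey.
    replace (((ee + 3) * sqrt (sA n k a)) ^ 2) with ((ee + 3) ^ 2 * (sqrt (sA n k a) * sqrt (sA n k a))) by ring.
    rewrite hc. field. lra. }
  split; [|auto].
  unfold Kset, on_cyl. rewrite Et, Ez. split; [auto|]. unfold RR. pose proof (pos_INR (S (Dm n k))). unfold ee. lra.
Qed.

Lemma K_bound n k a p i : (k < n)%nat -> 0 < sA n k a -> Kset n k a p -> (i <= n)%nat ->
  Rabs (p i) <= 2 * INR k + RR n k + (ee + 6) ^ 2 + 1.
Proof.
  intros hkn hA [hc [ht hz]] hi.
  assert (hRR : 0 <= RR n k) by (unfold RR; pose proof (pos_INR (S (Dm n k))); lra).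
  assert (hk0 : 0 <= INR k) by apply pos_INR.
  assert (h6 : 0 <= (ee + 6) ^ 2) by apply pow2_ge_0.
  destruct (le_lt_dec i k) as [h|h].
  - assert (p i ^ 2 <= 2 * INR k).
    { rewrite <- rad_sq. unfold on_cyl in hc. rewrite <- hc. unfold xnorm2.
      apply (sum_term_le (fun i => p i ^ 2)); auto. intros; apply pow2_ge_0. }
    apply (sq_le_abs (p i) (2 * INR k + RR n k + (ee + 6) ^ 2)). lra.
  - assert (p i ^ 2 <= r2 n k p).
    { unfold r2. replace i with (S k + (i - S k))%nat by lia.
      apply (sum_term_le (fun j => p (S k + j)%nat ^ 2)); [intros; apply pow2_ge_0| unfold Dm; lia]. }
    assert (Er : r2 n k p = z2 n k a p + tt n k a p ^ 2).
    { unfold z2, tt. assert (hc2 : sqrt (sA n k a) * sqrt (sA n k a) = sA n k a) by (apply sqrt_sqrt; lra).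
      assert (sqrt (sA n k a) <> 0) by (intro E; rewrite E in hc2; lra).
      replace ((ydot n k a p / sqrt (sA n k a)) ^ 2) with (ydot n k a p ^ 2 / (sqrt (sA n k a) * sqrt (sA n k a))) by (field; auto).
      rewrite hc2. ring. }
    assert (tt n k a p ^ 2 <= (ee + 6) ^ 2) by (unfold ee in *; nra).
    apply (sq_le_abs (p i) (2 * INR k + RR n k + (ee + 6) ^ 2)). lra.
Qed.

Lemma K_closed n k a p : (k < n)%nat ->
  (forall eps, 0 < eps -> exists q, Kset n k a q /\ close n q p eps) -> Kset n k a p.
Proof.
  intros hkn H. unfold Kset, on_cyl.
  split; [|split; [split|]].
  - apply Rle_antisym.
    + apply (closed_le n (xnorm2 k)); [apply cont_xnorm2; auto|].
      intros e he; destruct (H e he) as [q [[h1 _] h2]]; exists q; split; auto; unfold on_cyl in h1; lra.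
    + apply (closed_ge n (xnorm2 k)); [apply cont_xnorm2; auto|].
      intros e he; destruct (H e he) as [q [[h1 _] h2]]; exists q; split; auto; unfold on_cyl in h1; lra.
  - apply (closed_ge n (tt n k a)); [apply cont_tt; auto|].
    intros e he; destruct (H e he) as [q [[_ [h1 _]] h2]]; exists q; split; auto; lra.
  - apply (closed_le n (tt n k a)); [apply cont_tt; auto|].
    intros e he; destruct (H e he) as [q [[_ [h1 _]] h2]]; exists q; split; auto; lra.
  - apply (closed_le n (z2 n k a)); [apply cont_z2; auto|].
    intros e he; destruct (H e he) as [q [[_ [_ h1]] h2]]; exists q; split; auto; lra.
Qed.

Lemma close_mono n q p e1 e2 : close n q p e1 -> e1 <= e2 -> close n q p e2.
Proof. intros h he i hi; specialize (h i hi); lra. Qed.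

Theorem proposition4p2 (n k : nat) (hk1 : (1 <= k)%nat) (hkn : (k <= n - 1)%nat)
  (a : nat -> R) (ha : exists j, (j < n - k)%nat /\ a j <> 0) :
  ~ stable_halfcyl n k a.
Proof.
  intros [u [d1 [d2 [HC [Hpos HL]]]]].
  assert (hkn' : (k < n)%nat) by lia.
  pose proof (A_pos n k a ha) as hA.
  assert (hc2 : sqrt (sA n k a) * sqrt (sA n k a) = sA n k a) by (apply sqrt_sqrt; lra).
  assert (hc : 0 < sqrt (sA n k a)) by (apply sqrt_lt_R0; auto).
  pose proof (rad_pos k hk1) as hrad.
  set (ut := fun q => u (cyl_proj n k q)) in *.
  assert (KR : forall p, Kset n k a p -> region n k a p).
  { intros p [h1 [h2 h3]]. split; auto.
    replace (ydot n k a p) with (tt n k a p * sqrt (sA n k a)) by (unfold tt; field; lra).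
    unfold ee in *. nra. }
  assert (KN : forall p, Kset n k a p -> nbhd n k a p).
  { intros p hp. destruct (KR p hp) as [h1 h2]. split; auto.
    unfold on_cyl in h1. rewrite h1. nra. }
  assert (Kut : forall p, Kset n k a p -> 0 < ut p) by (intros p hp; apply Hpos, KR; auto).
  assert (Kcont : forall p, Kset n k a p -> cont_at n ut p) by (intros p hp; apply (HC p (KN p hp))).
  set (W := fun q => Phi n k a q * / ut q).
  assert (Wcont : forall p, Kset n k a p -> cont_at n W p).
  { intros p hp. apply cont_mult; [apply cont_Phi; auto|].
    apply cont_inv; [auto| pose proof (Kut p hp); lra]. }
  destruct (Bridge.evt n (2 * INR k + RR n k + (ee + 6) ^ 2 + 1) (Kset n k a) W) as [ps [Kps Hmax]].
  { intros p hp i hi. apply (K_bound n k a p i); auto. }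
  { intros p H. apply (K_closed n k a p hkn'). exact H. }
  { exists (p0 n k a). apply p0_K; auto. }
  { exact Wcont. }
  assert (Wle : forall q, Kset n k a q -> W q <= W ps).
  { intros q hq. destruct (Hmax q hq) as [p' [hp' [hle hag]]].
    rewrite <- (cont_eq n W q p' (Wcont q hq) hag). auto. }
  set (m := W ps).
  assert (hm : 0 < m).
  { destruct (p0_K n k a hk1 hkn' hA) as [hK [ht hz]].
    apply Rlt_le_trans with (W (p0 n k a)); [|apply Wle; auto].
    unfold W, Phi. rewrite ht, hz. replace (ee + 3 - ee) with 3 by ring.
    pose proof (Kut _ hK). apply Rmult_lt_0_compat; [|apply Rinv_0_lt_compat; auto].
    apply Rmult_lt_0_compat; [apply G0_pos; lra|].
    unfold RR. pose proof (pos_INR (S (Dm n k))). pose proof (lt_0_INR (S (Dm n k)) ltac:(lia)). lra. }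
  assert (hutps := Kut ps Kps).
  assert (EPhi : Phi n k a ps = m * ut ps) by (unfold m, W; field; lra).
  assert (Kps' := Kps). destruct Kps' as [Kc [Kt Kz]].
  assert (hQ : 0 < RR n k - z2 n k a ps /\ 0 < tt n k a ps - ee < 6).
  { assert (hPhi : 0 < Phi n k a ps) by (rewrite EPhi; nra).
    assert (g0 : 0 <= G0 (tt n k a ps - ee)) by (apply G0_nonneg; lra).
    unfold Phi in hPhi.
    destruct (Req_dec (G0 (tt n k a ps - ee)) 0) as [E|E]; [rewrite E in hPhi; lra|].
    split; [nra|]. apply G0_pos_inv; [lra|]. lra. }
  set (c := sqrt (sA n k a)) in *. set (A := sA n k a) in *.
  assert (Loc : forall i, (i <= n)%nat ->
    (psi2 c A ee (RR n k) (ydot n k a ps) (r2 n k ps) (ps i) (al n k a i) (ga n k i) <= m * d2 i i ps) /\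
    (psi1 c A ee (RR n k) (ydot n k a ps) (r2 n k ps) (ps i) (al n k a i) (ga n k i) 0 = m * d1 i ps)).
  { intros i hi.
    set (eps1 := Rmin (tt n k a ps - ee) (ee + 6 - tt n k a ps)).
    assert (he1 : 0 < eps1) by (apply Rmin_pos; lra).
    destruct (cont_tt n k a ps hkn' eps1 he1) as [d1' [hd1 H1]].
    destruct (cont_z2 n k a ps hkn' (RR n k - z2 n k a ps) (proj1 hQ)) as [d2' [hd2 H2]].
    assert (hr2 : 0 < rad k ^ 2) by nra.
    destruct (cont_xnorm2 n k ps hkn' (rad k ^ 2) hr2) as [d3' [hd3 H3]].
    set (dl := Rmin d1' (Rmin d2' d3')).
    assert (hdl : 0 < dl) by (apply Rmin_pos; [lra| apply Rmin_pos; lra]).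
    assert (hdl1 : dl <= d1') by apply Rmin_l.
    assert (hdl2 : dl <= d2') by (pose proof (Rmin_r d1' (Rmin d2' d3')); pose proof (Rmin_l d2' d3'); unfold dl; lra).
    assert (hdl3 : dl <= d3') by (pose proof (Rmin_r d1' (Rmin d2' d3')); pose proof (Rmin_r d2' d3'); unfold dl; lra).
    assert (Lq : forall t, Rabs t < dl -> nbhd n k a (upd ps i (ps i + t)) /\
                   Phi n k a (upd ps i (ps i + t)) <= m * ut (upd ps i (ps i + t))).
    { intros t ht. set (q := upd ps i (ps i + t)).
      assert (hcl : close n q ps dl) by (apply upd_close; auto).
      specialize (H1 q (close_mono n q ps dl d1' hcl hdl1)).
      specialize (H2 q (close_mono n q ps dl d2' hcl hdl2)).
      specialize (H3 q (close_mono n q ps dl d3' hcl hdl3)).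
      apply Rabs_def2 in H1. apply Rabs_def2 in H2. apply Rabs_def2 in H3.
      pose proof (Rmin_l (tt n k a ps - ee) (ee + 6 - tt n k a ps)).
      pose proof (Rmin_r (tt n k a ps - ee) (ee + 6 - tt n k a ps)).
      unfold on_cyl in Kc. fold eps1 in H, H0.
      assert (hX : 0 < xnorm2 k q) by lra.
      assert (KQ : Kset n k a (cyl_proj n k q)).
      { split; [unfold on_cyl; apply xnorm2_cp; auto|]. rewrite tt_cp, z2_cp by auto. lra. }
      assert (Eut : ut (cyl_proj n k q) = ut q) by (unfold ut; rewrite cp_idem; auto).
      assert (hutq : 0 < ut q) by (rewrite <- Eut; apply Kut; auto).
      split.
      - split; auto.
        replace (ydot n k a q) with (tt n k a q * c) by (unfold tt; fold A c; field; lra).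
        unfold ee in *. nra.
      - pose proof (Wle _ KQ) as hw. fold m in hw. unfold W in hw.
        rewrite Phi_cp, Eut in hw by auto.
        apply Rmult_le_compat_r with (r := ut q) in hw; [|lra].
        rewrite Rmult_assoc, Rinv_l, Rmult_1_r in hw by lra. exact hw. }
    destruct (HC ps (KN ps Kps)) as [_ HDps].
    destruct (HDps i i hi hi) as [_ [D2 _]].
    destruct (onedim
      (fun t => psi c A ee (RR n k) (ydot n k a ps) (r2 n k ps) (ps i) (al n k a i) (ga n k i) t - m * line ut ps i t)
      (fun t => psi1 c A ee (RR n k) (ydot n k a ps) (r2 n k ps) (ps i) (al n k a i) (ga n k i) t - m * line (d1 i) ps i t)
      (psi2 c A ee (RR n k) (ydot n k a ps) (r2 n k ps) (ps i) (al n k a i) (ga n k i) - m * d2 i i ps) dl hdl)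
      as [E1 E2].
    - intros t ht. apply derivable_pt_lim_minus; [apply psi_d; lra|].
      apply (derivable_pt_lim_scal (line ut ps i) m t).
      apply shift_deriv.
      replace (fun s0 => line ut ps i (t + s0)) with (line ut (upd ps i (ps i + t)) i)
        by (apply functional_extensionality; intros; apply line_shift).
      destruct (HC _ (proj1 (Lq t ht))) as [_ HD]. destruct (HD i i hi hi) as [D1 _]. exact D1.
    - apply derivable_pt_lim_minus; [apply psi1_d; lra|].
      apply (derivable_pt_lim_scal (line (d1 i) ps i) m 0). exact D2.
    - intros t ht. destruct (Lq t ht) as [_ hle].
      unfold c, A. rewrite <- !Phi_upd. unfold line. rewrite upd_id. lra.
    - unfold line in E1. rewrite upd_id in E1. split; lra. }
  assert (HLps := HL ps (KR ps Kps)). unfold Lop in HLps.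
  assert (hnA : normA2 k = / 2).
  { unfold normA2. rewrite rad_sq. assert (0 < INR k) by (apply lt_0_INR; lia). field. lra. }
  rewrite hnA in HLps. fold ut in HLps.
  assert (S2 : sum_f_R0 (fun i => psi2 c A ee (RR n k) (ydot n k a ps) (r2 n k ps) (ps i) (al n k a i) (ga n k i)) n
               <= m * sum_f_R0 (fun i => d2 i i ps) n).
  { rewrite scal_sum. apply sum_Rle. intros i hi. rewrite Rmult_comm. apply (proj1 (Loc i hi)). }
  assert (S1 : sum_f_R0 (fun i => ps i * psi1 c A ee (RR n k) (ydot n k a ps) (r2 n k ps) (ps i) (al n k a i) (ga n k i) 0) n
               = m * sum_f_R0 (fun i => ps i * d1 i ps) n).
  { rewrite scal_sum. apply sum_eq. intros i hi. rewrite (proj2 (Loc i hi)). ring. }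
  unfold c, A in S2, S1. rewrite sum_psi2 in S2 by auto. rewrite sum_psi1 in S1 by auto.
  fold (tt n k a ps) in S1, S2. fold c A in S1, S2.
  assert (Ez : r2 n k ps = z2 n k a ps + ydot n k a ps ^ 2 / A) by (unfold z2; fold A; ring).
  rewrite Ez in S1, S2.
  replace (z2 n k a ps + ydot n k a ps ^ 2 / A - ydot n k a ps ^ 2 / A) with (z2 n k a ps) in S1, S2 by (field; lra).
  replace (-2 * (z2 n k a ps + ydot n k a ps ^ 2 / A) + 2 * ydot n k a ps ^ 2 / A) with (-2 * z2 n k a ps) in S1 by (field; lra).
  unfold Phi in EPhi.
  set (X2 := sum_f_R0 (fun i => d2 i i ps) n) in *.
  set (X1 := sum_f_R0 (fun i => ps i * d1 i ps) n) in *.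
  set (U := ut ps) in *.
  set (sg := tt n k a ps - ee) in *.
  set (Q := RR n k - z2 n k a ps) in *.
  set (D := INR (S (Dm n k))) in *.
  assert (hz := z2_nonneg n k a ps hA).
  assert (hkey := key_ineq sg Q (z2 n k a ps) D (proj2 hQ) hz ltac:(unfold Q, RR; fold D; ring) (proj1 hQ)).
  assert (Ett : tt n k a ps = sg + / 10) by (unfold sg, ee; ring).
  rewrite Ett in S1.
  assert (HL0 : m * (X2 - / 2 * X1 + (/ 2 + / 2) * U) = 0) by (rewrite HLps; ring).
  assert (G2 sg * Q + G0 sg * (2 - 2 * D) - / 2 * (G1 sg * (sg + / 10) * Q + G0 sg * (-2 * z2 n k a ps)) + G0 sg * Q <= 0).
  { replace (m * (X2 - / 2 * X1 + (/ 2 + / 2) * U)) with (m * X2 - / 2 * (m * X1) + m * U) in HL0 by field.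
    lra. }
  replace (Q * (G2 sg - / 2 * (sg + / 10) * G1 sg + G0 sg) + G0 sg * (2 - 2 * D + z2 n k a ps))
    with (G2 sg * Q + G0 sg * (2 - 2 * D) - / 2 * (G1 sg * (sg + / 10) * Q + G0 sg * (-2 * z2 n k a ps)) + G0 sg * Q) in hkey by field.
  lra.
Qed.
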